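(* Let $\Lambda=(W_j,\Lambda_j,v_j)_{j\in\mathbb{J}}$ be a g-fusion frame for $H$ with g-fusion frame operator $S_\Lambda$, let $\tilde W_j:=S_\Lambda^{-1}W_j$, $\tilde\Lambda_j:=\Lambda_j\pi_{W_j}S_\Lambda^{-1}$, let $\mathbb{I}\subseteq\mathbb{J}$, $\mathbb{I}^c=\mathbb{J}\setminus\mathbb{I}$, and for $\mathbb{K}\subseteq\mathbb{J}$ set $M_{\mathbb{K}}f:=\sum_{j\in\mathbb{K}}v_j^2\pi_{W_j}\Lambda_j^*\Lambda_j\pi_{W_j}f$. Then for every $f\in H$, $$\sum_{j\in\mathbb{I}}v_j^2\Vert\Lambda_j\pi_{W_j}f\Vert^2-\sum_{j\in\mathbb{J}}v_j^2\Vert\tilde{\Lambda}_j\pi_{\tilde{W}_j}M_{\mathbb{I}}f\Vert^2=\sum_{j\in\mathbb{I}^c}v_j^2\Vert\Lambda_j\pi_{W_j}f\Vert^2-\sum_{j\in\mathbb{J}}v_j^2\Vert\tilde{\Lambda}_j\pi_{\tilde{W}_j}M_{\mathbb{I}^c}f\Vert^2.$$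
   Context: $H$ is a separable Hilbert space, $\mathbb{J}\subseteq\mathbb{Z}$, $\{H_j\}_{j\in\mathbb{J}}$ are separable Hilbert spaces, $\Lambda_j\in\mathcal{B}(H,H_j)$, $W_j$ are closed subspaces of $H$, $v_j>0$, and $\pi_V$ denotes the orthogonal projection onto a closed subspace $V$. The triple $\Lambda=(W_j,\Lambda_j,v_j)$ is a g-fusion frame for $H$ if there exist $0<A\le B<\infty$ with $A\Vert f\Vert^2\le\sum_{j\in\mathbb{J}}v_j^2\Vert\Lambda_j\pi_{W_j}f\Vert^2\le B\Vert f\Vert^2$ for all $f\in H$. Its g-fusion frame operator $S_\Lambda f=\sum_{j\in\mathbb{J}}v_j^2\pi_{W_j}\Lambda_j^*\Lambda_j\pi_{W_j}f$ is bounded, positive and invertible; $(\tilde W_j,\tilde\Lambda_j,v_j)$ is the canonical dual g-fusion frame. *)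

(* Defs.v *)
From HB Require Import structures.
From mathcomp Require Import all_boot all_order all_algebra.
From mathcomp Require Import all_classical all_reals.
From mathcomp Require Import ereal esum.
From mathcomp Require Import complex.

Set Implicit Arguments.
Unset Strict Implicit.
Unset Printing Implicit Defensive.

Import Order.TTheory GRing.Theory Num.Theory.
Local Open Scope ring_scope.
Local Open Scope classical_set_scope.

Section HilbertDefs.
Variable R : realType.
Local Notation C := R[i].

Definition is_inner_product (V : lmodType C) (ip : V -> V -> C) : Prop :=
  [/\ (forall (a : C) (x y z : V), ip (a *: x + y) z = a * ip x z + ip y z),
      (forall x y : V, ip y x = Num.conj (ip x y)),
      (forall x : V, 0 <= ip x x) &
      (forall x : V, ip x x = 0 -> x = 0)].

Definition ipnorm (V : lmodType C) (ip : V -> V -> C) (x : V) : R :=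
  Num.sqrt (complex.Re (ip x x)).

Definition ip_complete (V : lmodType C) (ip : V -> V -> C) : Prop :=
  forall u : nat -> V,
    (forall e : R, 0 < e -> exists N : nat, forall m n : nat,
        (N <= m)%N -> (N <= n)%N -> ipnorm ip (u m - u n) < e) ->
    exists x : V, forall e : R, 0 < e -> exists N : nat, forall n : nat,
        (N <= n)%N -> ipnorm ip (u n - x) < e.

Definition ip_separable (V : lmodType C) (ip : V -> V -> C) : Prop :=
  exists d : nat -> V, forall (x : V) (e : R), 0 < e ->
    exists n : nat, ipnorm ip (x - d n) < e.

Definition separable_hilbert (V : lmodType C) (ip : V -> V -> C) : Prop :=
  [/\ is_inner_product ip, ip_complete ip & ip_separable ip].

Definition closed_subspace (V : lmodType C) (ip : V -> V -> C) (W : set V) : Prop :=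
  [/\ W 0,
      (forall (a : C) (x y : V), W x -> W y -> W (a *: x + y)) &
      (forall x : V, (forall e : R, 0 < e -> exists2 w, W w & ipnorm ip (x - w) < e) ->
          W x)].

Definition is_orth_proj (V : lmodType C) (ip : V -> V -> C) (W : set V) (P : V -> V) : Prop :=
  forall x : V, W (P x) /\ forall w : V, W w -> ip (x - P x) w = 0.

Definition bounded_op (U V : lmodType C) (ipU : U -> U -> C) (ipV : V -> V -> C)
  (T : U -> V) : Prop :=
  exists c : R, forall x : U, ipnorm ipV (T x) <= c * ipnorm ipU x.

Definition is_adjoint (U V : lmodType C) (ipU : U -> U -> C) (ipV : V -> V -> C)
  (T : U -> V) (T' : V -> U) : Prop :=
  forall (x : U) (y : V), ipV (T x) y = ipU x (T' y).

(* unconditional (net of finite partial sums) convergence of sum_{j in K} F j to s *)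
Definition has_usum (V : lmodType C) (ip : V -> V -> C) (K : set int)
  (F : int -> V) (s : V) : Prop :=
  forall e : R, 0 < e -> exists F0 : seq int, {subset F0 <= K} /\
    forall G : seq int, uniq G -> {subset F0 <= G} -> {subset G <= K} ->
      ipnorm ip (s - \sum_(j <- G) F j) < e.

(* The triple (W_j, Lambda_j, v_j)_{j in J} is a g-fusion frame for H
   (P j is the orthogonal projection onto W j, supplied separately). *)
Definition g_fusion_frame (H : lmodType C) (ip : H -> H -> C)
  (Hj : int -> lmodType C) (ipj : forall j, Hj j -> Hj j -> C)
  (J : set int) (P : int -> H -> H) (L : forall j, H -> Hj j) (v : int -> R) : Prop :=
  exists A B : R, [/\ 0 < A, A <= B &
    forall f : H,
      ((A * ipnorm ip f ^+ 2)%:E <=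
         \esum_(j in J) ((v j ^+ 2 * ipnorm (ipj j) (L j (P j f)) ^+ 2)%:E))%E /      (\esum_(j in J) ((v j ^+ 2 * ipnorm (ipj j) (L j (P j f)) ^+ 2)%:E) <=
         (B * ipnorm ip f ^+ 2)%:E)%E].

Definition rC (a : R) : C := Complex a 0.

End HilbertDefs.

(* Main.v *)
Require Import Defs.
From HB Require Import structures.
From mathcomp Require Import all_boot all_order all_algebra.
From mathcomp Require Import all_classical all_reals.
From mathcomp Require Import ereal esum.
From mathcomp Require Import complex.
From mathcomp Require Import lra.

Import Order.TTheory GRing.Theory Num.Theory.
Local Open Scope ring_scope.
Local Open Scope classical_set_scope.
Set Implicit Arguments.
Unset Strict Implicit.
Section IP.
Variables (R : realType) (V : lmodType R[i]) (ip : V -> V -> R[i]).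
Hypothesis Hip : is_inner_product ip.

Definition rip (x y : V) : R := complex.Re (ip x y).

Lemma ReD (z w : R[i]) : complex.Re (z + w) = complex.Re z + complex.Re w.
Proof. by case: z => a b; case: w. Qed.
Lemma ReN (z : R[i]) : complex.Re (- z) = - complex.Re z.
Proof. by case: z. Qed.
Lemma ReJ (z : R[i]) : complex.Re (Num.conj z) = complex.Re z.
Proof. by case: z. Qed.
Lemma ReM_rC (a : R) (z : R[i]) : complex.Re (rC a * z) = a * complex.Re z.
Proof. by case: z => c d /=; rewrite mul0r subr0. Qed.
Lemma Re0 : complex.Re (0 : R[i]) = 0. Proof. by []. Qed.

Lemma ip0l z : ip 0 z = 0.
Proof.
case: Hip => H1 _ _ _.
have := H1 1 0 0 z; rewrite scaler0 addr0 mul1r => h.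
by apply: (addrI (ip 0 z)); rewrite addr0 -h.
Qed.

Lemma ipDl x y z : ip (x + y) z = ip x z + ip y z.
Proof. by case: Hip => H1 _ _ _; rewrite -[x]scale1r H1 mul1r scale1r. Qed.

Lemma ipZl a x z : ip (a *: x) z = a * ip x z.
Proof. by case: Hip => H1 _ _ _; rewrite -[a *: x]addr0 H1 ip0l addr0. Qed.

Lemma ipNl x z : ip (- x) z = - ip x z.
Proof. by rewrite -scaleN1r ipZl mulN1r. Qed.

Lemma ipBl x y z : ip (x - y) z = ip x z - ip y z.
Proof. by rewrite ipDl ipNl. Qed.

Lemma ripC x y : rip x y = rip y x.
Proof. by case: Hip => _ H2 _ _; rewrite /rip H2 ReJ. Qed.

Lemma ripDl x y z : rip (x + y) z = rip x z + rip y z.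
Proof. by rewrite /rip ipDl ReD. Qed.
Lemma ripBl x y z : rip (x - y) z = rip x z - rip y z.
Proof. by rewrite /rip ipBl ReD ReN. Qed.
Lemma ripZl a x z : rip (rC a *: x) z = a * rip x z.
Proof. by rewrite /rip ipZl ReM_rC. Qed.
Lemma rip0l z : rip 0 z = 0.
Proof. by rewrite /rip ip0l. Qed.
Lemma ripDr x y z : rip z (x + y) = rip z x + rip z y.
Proof. by rewrite ripC ripDl !(ripC z). Qed.
Lemma ripBr x y z : rip z (x - y) = rip z x - rip z y.
Proof. by rewrite ripC ripBl !(ripC z). Qed.
Lemma ripZr a x z : rip z (rC a *: x) = a * rip z x.
Proof. by rewrite ripC ripZl ripC. Qed.

Lemma rip_suml (G : seq int) (F : int -> V) z :
  rip (\sum_(j <- G) F j) z = \sum_(j <- G) rip (F j) z.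
Proof.
elim: G => [|a G IH]; first by rewrite !big_nil rip0l.
by rewrite !big_cons ripDl IH.
Qed.

Lemma rip_ge0 x : 0 <= rip x x.
Proof. by case: Hip => _ _ H3 _; move: (H3 x); rewrite lecE => /andP[_]. Qed.

Lemma rip_eq0 x : rip x x = 0 -> x = 0.
Proof.
case: Hip => _ _ H3 H4 h; apply: H4.
have := ger0_Im (H3 x); move: h; rewrite /rip.
by case: (ip x x) => a b /= -> ->.
Qed.

Lemma ipnorm2 x : ipnorm ip x ^+ 2 = rip x x.
Proof. by rewrite /ipnorm sqr_sqrtr // rip_ge0. Qed.

Lemma rip_small y e : 0 < e -> exists2 d, 0 < d &
  forall x, ipnorm ip x < d -> `|rip x y| < e.
Proof.
move=> e0; set c := rip y y.
have c0 : 0 <= c by apply: rip_ge0.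
exists (e / (1 + c)); first by apply: divr_gt0 => //; lra.
move=> x; set d := e / (1 + c) => hx.
have d0 : 0 < d by apply: divr_gt0 => //; lra.
have ed : e = d * (1 + c) by rewrite /d divfK //; lra.
have hn : 0 <= ipnorm ip x by apply: sqrtr_ge0.
have a_lt : rip x x < d ^+ 2 by rewrite -ipnorm2; nra.
have key : forall s : R, 0 <= rip x x - 2 * s * rip x y + s ^+ 2 * c.
  move=> s; have := rip_ge0 (x - rC s *: y).
  rewrite ripBl !ripBr !ripZl !ripZr (ripC y x) /c.
  move=> h; nra.
have k1 := key d; have k2 := key (- d).
rewrite ltr_norml; apply/andP; split.
- have : d * (2 * - rip x y) < d * e by rewrite ed; nra.
  rewrite ltr_pM2l //; lra.
- have : d * (2 * rip x y) < d * e by rewrite ed; nra.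
  rewrite ltr_pM2l //; lra.
Qed.

End IP.
Section RSum.
Variable R : realType.

Definition has_rsum (K : set int) (c : int -> R) (s : R) : Prop :=
  forall e : R, 0 < e -> exists F0 : seq int, {subset F0 <= K} /\
    forall G : seq int, uniq G -> {subset F0 <= G} -> {subset G <= K} ->
      `|s - \sum_(j <- G) c j| < e.

Lemma rsum_unique K c a b : has_rsum K c a -> has_rsum K c b -> a = b.
Proof.
move=> ha hb; apply/eqP; rewrite -subr_eq0 -normr_le0.
apply/ler_addgt0Pr => e e0; rewrite add0r.
have e20 : 0 < e / 2 by rewrite divr_gt0.
have [F1 [F1K h1]] := ha _ e20; have [F2 [F2K h2]] := hb _ e20.
set G := undup (F1 ++ F2).
have uG : uniq G by apply: undup_uniq.
have GK : {subset G <= K}.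
  by move=> x; rewrite mem_undup mem_cat => /orP[/F1K|/F2K].
have s1 : {subset F1 <= G} by move=> x xF; rewrite mem_undup mem_cat xF.
have s2 : {subset F2 <= G} by move=> x xF; rewrite mem_undup mem_cat xF orbT.
have := h1 G uG s1 GK; have := h2 G uG s2 GK.
set t := \sum_(j <- G) c j => hb' ha'.
have -> : a - b = (a - t) - (b - t) by rewrite opprB addrA subrK.
apply: le_trans (ler_normB _ _) _.
by rewrite (splitr e); apply: ltW; apply: ltrD.
Qed.

Lemma rsum_ext K c d s : (forall j, K j -> c j = d j) ->
  has_rsum K c s -> has_rsum K d s.
Proof.
move=> cd hc e e0; have [F0 [F0K h]] := hc e e0; exists F0; split => // G uG FG GK.
rewrite (_ : \sum_(j <- G) d j = \sum_(j <- G) c j); first exact: h.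
rewrite big_seq_cond [RHS]big_seq_cond; apply: eq_bigr => j /andP[jG _].
by rewrite cd //; move: (GK j jG); rewrite in_setE.
Qed.

Lemma rsumD K c d a b : has_rsum K c a -> has_rsum K d b ->
  has_rsum K (fun j => c j + d j) (a + b).
Proof.
move=> ha hb e e0.
have e20 : 0 < e / 2 by rewrite divr_gt0.
have [F1 [F1K h1]] := ha _ e20; have [F2 [F2K h2]] := hb _ e20.
exists (F1 ++ F2); split.
  by move=> x; rewrite mem_cat => /orP[/F1K|/F2K].
move=> G uG FG GK.
have s1 : {subset F1 <= G} by move=> x xF; apply: FG; rewrite mem_cat xF.
have s2 : {subset F2 <= G} by move=> x xF; apply: FG; rewrite mem_cat xF orbT.
have := h1 G uG s1 GK; have := h2 G uG s2 GK => hb' ha'.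
rewrite big_split /= opprD addrACA.
apply: le_lt_trans (ler_normD _ _) _.
by rewrite (splitr e); apply: ltrD.
Qed.

Lemma rsum_split I J c a b : I `<=` J -> has_rsum I c a -> has_rsum (J `\` I) c b ->
  has_rsum J c (a + b).
Proof.
move=> IJ ha hb e e0.
have e20 : 0 < e / 2 by rewrite divr_gt0.
have [F1 [F1K h1]] := ha _ e20; have [F2 [F2K h2]] := hb _ e20.
exists (F1 ++ F2); split.
  move=> x; rewrite mem_cat => /orP[/F1K|/F2K]; rewrite !in_setE.
    by apply: IJ.
  by case.
move=> G uG FG GK.
set p := fun j : int => `[< I j >].
rewrite -(perm_big _ (permEl (perm_filterC p G))) big_cat /=.
have uG1 : uniq (seq.filter p G) by apply: seq.filter_uniq.
have uG2 : uniq (seq.filter (predC p) G) by apply: seq.filter_uniq.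
have s1 : {subset F1 <= seq.filter p G}.
  move=> x xF; rewrite mem_filter FG ?mem_cat ?xF // andbT /p.
  by apply/asboolP; move: (F1K x xF); rewrite in_setE.
have s2 : {subset F2 <= seq.filter (predC p) G}.
  move=> x xF; rewrite mem_filter FG ?mem_cat ?xF ?orbT // andbT /= /p.
  by apply/negP => /asboolP; move: (F2K x xF); rewrite in_setE => -[].
have G1K : {subset seq.filter p G <= I}.
  by move=> x; rewrite mem_filter /p => /andP[/asboolP ? _]; rewrite in_setE.
have G2K : {subset seq.filter (predC p) G <= J `\` I}.
  move=> x; rewrite mem_filter /p /= => /andP[/asboolP ? /GK]; rewrite !in_setE.
  by move=> ?; split.
have := h1 _ uG1 s1 G1K; have := h2 _ uG2 s2 G2K => hb' ha'.
rewrite opprD addrACA.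
apply: le_lt_trans (ler_normD _ _) _.
by rewrite (splitr e); apply: ltrD.
Qed.

Lemma sum_sub_le (c : int -> R) (r G : seq int) : uniq r -> uniq G ->
  {subset r <= G} -> (forall j, j \in G -> 0 <= c j) ->
  \sum_(j <- r) c j <= \sum_(j <- G) c j.
Proof.
move=> ur uG rG c0.
set p := fun j => j \in r.
rewrite -(perm_big _ (permEl (perm_filterC p G))) big_cat /=.
have -> : \sum_(j <- seq.filter p G) c j = \sum_(j <- r) c j.
  apply: perm_big; apply: uniq_perm; rewrite ?seq.filter_uniq //.
  by move=> x; rewrite mem_filter /p; case xr: (x \in r) => //=; rewrite rG.
rewrite lerDl big_seq; apply: sumr_ge0 => j.
by rewrite mem_filter => /andP[_ /c0].
Qed.

Lemma rsum_esum (K : set int) (c : int -> R) (s : R) : (forall j, K j -> 0 <= c j) -> has_rsum K c s ->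
  (\esum_(j in K) (c j)%:E = s%:E)%E.
Proof.
move=> c0 hs; apply/eqP; rewrite eq_le; apply/andP; split.
- apply: ge_ereal_sup => _ [X [finX XK] <-].
  rewrite fsbig_finite // sumEFin lee_fin.
  set r := (X in \sum_(_ <- X) _).
  have rK : {subset r <= K}.
    by move=> x; rewrite /r in_fset_set // !in_setE => /XK.
  have ur : uniq r by rewrite /r; apply: finmap.fset_uniq.
  apply/ler_addgt0Pr => e e0.
  have [F0 [F0K h]] := hs e e0.
  set G := undup (F0 ++ r).
  have uG : uniq G by apply: undup_uniq.
  have GK : {subset G <= K}.
    by move=> x; rewrite mem_undup mem_cat => /orP[/F0K|/rK].
  have s1 : {subset F0 <= G} by move=> x xF; rewrite mem_undup mem_cat xF.
  have s2 : {subset r <= G} by move=> x xF; rewrite mem_undup mem_cat xF orbT.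
  have := h G uG s1 GK => hG.
  apply: le_trans (@sum_sub_le c r G ur uG s2 _) _.
    by move=> j /GK; rewrite in_setE => /c0.
  move: hG; rewrite ltr_norml => /andP[? _]; lra.
- apply/lee_subgt0Pr => e e0.
  have [F0 [F0K h]] := hs e e0.
  apply: esum_ge; exists [set` undup F0].
    split; first exact: finite_seq.
    by move=> x /=; rewrite mem_undup => /F0K; rewrite in_setE.
  rewrite -fsbig_seq ?undup_uniq // sumEFin -EFinB lee_fin.
  have hh : `|s - \sum_(j <- undup F0) c j| < e.
    apply: h; first exact: undup_uniq.
    + by move=> x xF; rewrite mem_undup.
    + by move=> x; rewrite mem_undup => /F0K.
  move: hh; rewrite ltr_norml => /andP[_ ?]; lra.
Qed.

End RSum.
Lemma usum_rsum (R : realType) (V : lmodType R[i]) (ip : V -> V -> R[i])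
  (Hip : is_inner_product ip) K F s y :
  has_usum ip K F s -> has_rsum K (fun j => rip ip (F j) y) (rip ip s y).
Proof.
move=> hu e e0; have [d d0 hd] := rip_small Hip y e0.
have [F0 [F0K h]] := hu d d0; exists F0; split => // G uG FG GK.
rewrite -(rip_suml Hip) -(ripBl Hip); apply: hd; exact: h.
Qed.

Section Proj.
Variables (R : realType) (V : lmodType R[i]) (ip : V -> V -> R[i]).
Hypothesis Hip : is_inner_product ip.
Variables (W : set V) (P : V -> V).
Hypothesis HW : closed_subspace ip W.
Hypothesis HP : is_orth_proj ip W P.

Lemma W_add x y : W x -> W y -> W (x + y).
Proof. by case: HW => _ h _ wx wy; have := h 1 x y wx wy; rewrite scale1r. Qed.
Lemma W_opp x : W x -> W (- x).
Proof.
by case: HW => h0 h _ wx; have := h (-1) x 0 wx h0; rewrite addr0 scaleN1r.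
Qed.

Lemma orth_l x w : W w -> ip (x - P x) w = 0.
Proof. by move=> ww; have [_ h] := HP x; apply: h. Qed.

Lemma proj_rip a b : rip ip (P a) b = rip ip a (P b).
Proof.
have ra : rip ip (a - P a) (P b) = 0 by rewrite /rip orth_l //; case: (HP b).
have rb : rip ip (b - P b) (P a) = 0 by rewrite /rip orth_l //; case: (HP a).
have h1 : rip ip (P a) b = rip ip (P a) (P b) + rip ip (P a) (b - P b).
  by rewrite -ripDr // [P b + _]addrC subrK.
have h2 : rip ip a (P b) = rip ip (P a) (P b) + rip ip (a - P a) (P b).
  by rewrite -ripDl // [P a + _]addrC subrK.
by rewrite h1 h2 ra (ripC Hip (P a) (b - P b)) rb.
Qed.

Lemma proj_add x y : P (x + y) = P x + P y.
Proof.
set d := P (x + y) - P x - P y.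
have Wd : W d.
  by rewrite /d; apply: W_add; [apply: W_add; [|apply: W_opp]|apply: W_opp];
    case: (HP (x + y)) => //; case: (HP x) => //; case: (HP y).
have : rip ip d d = 0.
  by rewrite /d !ripBl // !proj_rip ripDl // addrAC addrK subrr.
move/(rip_eq0 Hip)/eqP; rewrite /d subr_eq0 subr_eq => /eqP ->.
by rewrite addrC.
Qed.

Lemma proj_zero x : (forall w, W w -> rip ip x w = 0) -> P x = 0.
Proof.
move=> h; apply: (rip_eq0 Hip).
have wp : W (P x) by case: (HP x).
have : rip ip (x - P x) (P x) = 0 by rewrite /rip orth_l.
by rewrite ripBl // h // sub0r => /eqP; rewrite oppr_eq0 => /eqP.
Qed.

End Proj.
Unset Implicit Arguments.

Theorem theorem3p5
  (R : realType) (H : lmodType R[i]) (ip : H -> H -> R[i])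
  (HH : separable_hilbert ip)
  (J : set int)
  (Hj : int -> lmodType R[i]) (ipj : forall j, Hj j -> Hj j -> R[i])
  (HHj : forall j, J j -> separable_hilbert (ipj j))
  (W : int -> set H) (HW : forall j, J j -> closed_subspace ip (W j))
  (P : int -> H -> H) (HP : forall j, J j -> is_orth_proj ip (W j) (P j))
  (L : forall j, {linear H -> Hj j})
  (HLb : forall j, J j -> bounded_op ip (ipj j) (L j))
  (Ls : forall j, Hj j -> H)
  (HLs : forall j, J j -> is_adjoint ip (ipj j) (L j) (Ls j))
  (v : int -> R) (Hv : forall j, J j -> 0 < v j)
  (Hframe : g_fusion_frame ip ipj J P (fun j => L j : H -> Hj j) v)
  (S : H -> H)
  (HS : forall f : H,
      has_usum ip J (fun j => rC (v j ^+ 2) *: P j (Ls j (L j (P j f)))) (S f))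
  (Sinv : H -> H) (HSinv : cancel S Sinv /\ cancel Sinv S)
  (Pt : int -> H -> H)
  (HPt : forall j, J j -> is_orth_proj ip (Sinv @` W j) (Pt j))
  (I : set int) (HI : I `<=` J)
  (MI MIc : H -> H)
  (HMI : forall f : H,
      has_usum ip I (fun j => rC (v j ^+ 2) *: P j (Ls j (L j (P j f)))) (MI f))
  (HMIc : forall f : H,
      has_usum ip (J `\` I) (fun j => rC (v j ^+ 2) *: P j (Ls j (L j (P j f)))) (MIc f))
  (f : H) :
  (\esum_(j in I) ((v j ^+ 2 * ipnorm (ipj j) (L j (P j f)) ^+ 2)%:E)
   - \esum_(j in J)
       ((v j ^+ 2 * ipnorm (ipj j) (L j (P j (Sinv (Pt j (MI f))))) ^+ 2)%:E)
  = \esum_(j in J `\` I) ((v j ^+ 2 * ipnorm (ipj j) (L j (P j f)) ^+ 2)%:E)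
   - \esum_(j in J)
       ((v j ^+ 2 * ipnorm (ipj j) (L j (P j (Sinv (Pt j (MIc f))))) ^+ 2)%:E))%E.
Proof.
have Hip : is_inner_product ip by case: HH.
have Hipj : forall j, J j -> is_inner_product (ipj j) by move=> j /HHj [].
case: HSinv => K1 K2.
pose c := fun j x y => v j ^+ 2 * rip (ipj j) (L j (P j x)) (L j (P j y)).
have cT : forall j x y, J j ->
    rip ip (rC (v j ^+ 2) *: P j (Ls j (L j (P j x)))) y = c j x y.
  move=> j x y Jj; rewrite ripZl // (proj_rip Hip (HP j Jj)) /c; congr (_ * _).
  rewrite /rip; case: Hip => _ Hc _ _; rewrite Hc -(HLs j Jj) ReJ.
  exact: (ripC (Hipj j Jj)).
have rsK : forall K x s, K `<=` J ->
    has_usum ip K (fun j => rC (v j ^+ 2) *: P j (Ls j (L j (P j x)))) s ->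
    forall y, has_rsum K (fun j => c j x y) (rip ip s y).
  move=> K x s KJ hu y; apply: (rsum_ext _ (usum_rsum Hip y hu)).
  by move=> j Kj; apply: cT; apply: KJ.
have Sr : forall x y, has_rsum J (fun j => c j x y) (rip ip (S x) y).
  by move=> x; apply: rsK (HS x).
have cD : forall j x1 x2 y, J j -> c j (x1 + x2) y = c j x1 y + c j x2 y.
  move=> j x1 x2 y Jj.
  by rewrite /c (proj_add Hip (HW j Jj) (HP j Jj)) linearD (ripDl (Hipj j Jj)) mulrDr.
have cC : forall j x y, J j -> c j x y = c j y x.
  by move=> j x y Jj; rewrite /c (ripC (Hipj j Jj)).
have SD : forall x1 x2, S (x1 + x2) = S x1 + S x2.
  move=> x1 x2; pose d := S (x1 + x2) - S x1 - S x2.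
  have hd : forall y, rip ip d y = 0.
    move=> y; rewrite /d !ripBl //.
    have h := rsumD (Sr x1 y) (Sr x2 y).
    have h' : has_rsum J (fun j => c j (x1 + x2) y)
        (rip ip (S x1) y + rip ip (S x2) y).
      by apply: rsum_ext h => j Jj; rewrite cD.
    by rewrite (rsum_unique (Sr (x1 + x2) y) h') addrAC addrK subrr.
  have := rip_eq0 Hip (hd d); rewrite /d => /eqP.
  by rewrite subr_eq0 subr_eq => /eqP ->; rewrite addrC.
have Ssym : forall x y, rip ip (S x) y = rip ip (S y) x.
  move=> x y; apply: (rsum_unique (Sr x y)); apply: rsum_ext (Sr y x).
  by move=> j Jj; apply: cC.
have SinvD : forall a b, Sinv (a + b) = Sinv a + Sinv b.
  by move=> a b; apply: (can_inj K1); rewrite SD !K2.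
have DIJ : J `\` I `<=` J by move=> j [].
have Msplit : S f = MI f + MIc f.
  pose d := S f - MI f - MIc f.
  have hd : forall y, rip ip d y = 0.
    move=> y; rewrite /d !ripBl //.
    have h := rsum_split HI (rsK I f _ HI (HMI f) y) (rsK _ f _ DIJ (HMIc f) y).
    by rewrite (rsum_unique (Sr f y) h) addrAC addrK subrr.
  have := rip_eq0 Hip (hd d); rewrite /d => /eqP.
  by rewrite subr_eq0 subr_eq => /eqP ->; rewrite addrC.
have PtE : forall j z, J j -> P j (Sinv (Pt j z)) = P j (Sinv z).
  move=> j z Jj.
  have -> : Sinv z = Sinv (Pt j z) + Sinv (z - Pt j z).
    by rewrite -SinvD addrC subrK.
  rewrite (proj_add Hip (HW j Jj) (HP j Jj)) (@proj_zero _ _ _ Hip _ _ (HP j Jj) (Sinv (z - Pt j z))) ?addr0 //.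
  move=> w Ww.
  have -> : rip ip (Sinv (z - Pt j z)) w = rip ip (Sinv (z - Pt j z)) (S (Sinv w)).
    by rewrite K2.
  rewrite (ripC Hip) Ssym K2 /rip.
  have [_ hpt] := HPt j Jj z.
  by rewrite hpt //; exists w.
have nrm : forall j x, J j -> v j ^+ 2 * ipnorm (ipj j) (L j (P j x)) ^+ 2 = c j x x.
  by move=> j x Jj; rewrite (ipnorm2 (Hipj j Jj)).
have c0 : forall j x, J j -> 0 <= c j x x.
  by move=> j x Jj; rewrite /c mulr_ge0 ?sqr_ge0 // rip_ge0 //; apply: Hipj.
pose g := Sinv (MI f); pose h := Sinv (MIc f).
have E1 : (\esum_(j in I) ((v j ^+ 2 * ipnorm (ipj j) (L j (P j f)) ^+ 2)%:E)
    = (rip ip (MI f) f)%:E)%E.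
  rewrite (@eq_esum _ _ I _ (fun j => (c j f f)%:E)); last first.
    by move=> j Ij; rewrite nrm //; apply: HI.
  by apply: rsum_esum (rsK I f _ HI (HMI f) f) => j Ij; apply: c0; apply: HI.
have E3 : (\esum_(j in J `\` I) ((v j ^+ 2 * ipnorm (ipj j) (L j (P j f)) ^+ 2)%:E)
    = (rip ip (MIc f) f)%:E)%E.
  rewrite (@eq_esum _ _ (J `\` I) _ (fun j => (c j f f)%:E)); last first.
    by move=> j Ij; rewrite nrm //; apply: DIJ.
  by apply: rsum_esum (rsK _ f _ DIJ (HMIc f) f) => j Ij; apply: c0; apply: DIJ.
have E2 : forall z, (\esum_(j in J)
       ((v j ^+ 2 * ipnorm (ipj j) (L j (P j (Sinv (Pt j z)))) ^+ 2)%:E)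
    = (rip ip (S (Sinv z)) (Sinv z))%:E)%E.
  move=> z; rewrite (@eq_esum _ _ J _ (fun j => (c j (Sinv z) (Sinv z))%:E)).
    by apply: rsum_esum (Sr _ _) => j Jj; apply: c0.
  by move=> j Jj; rewrite PtE // nrm.
rewrite E1 E3 !E2 -!EFinB; congr EFin.
have fgh : f = g + h by apply: (can_inj K1); rewrite SD /g /h !K2 Msplit.
have Sg : S g = MI f by rewrite /g K2.
have Sh : S h = MIc f by rewrite /h K2.
rewrite -/g -/h -Sg -Sh.
have e1 : rip ip (S g) f = rip ip (S g) g + rip ip (S g) h by rewrite {1}fgh ripDr.
have e2 : rip ip (S h) f = rip ip (S h) g + rip ip (S h) h by rewrite {1}fgh ripDr.
have e3 := Ssym g h.
lra.
Qed.
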